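(* Let $B\ge1$ be a constant, and let $G$ be a random bipartite graph sampled from $\mathcal{G}(n,m,p)$ with $n\le m$ and $\frac{8B\log m}{n}\le p\le1$. For any vector of positive integers $\mathbf{s}=(s_1,\ldots,s_n)$ with $\sum_{i=1}^n s_i\le m$ and $\frac{\max_i s_i}{\min_i s_i}\le B$, with high probability (probability tending to $1$ as $n\to\infty$), $G$ contains a left-saturating $\mathbf{s}$-matching.
   Context: $\mathcal{G}(|L|,|R|,p)$ is the distribution over bipartite graphs on vertex sets $L,R$ in which each edge $(i,j)$, $i\in L$, $j\in R$, is present independently with probability $p$; here $|L|=n$, $|R|=m$. $\log$ is natural. An $\mathbf{s}$-matching is a set $F$ of edges such that each $i\in L$ is incident to at most $s_i$ edges of $F$ and each vertex of $R$ to at most one; it is left-saturating if each $i\in L$ is incident to exactly $s_i$ edges of $F$. *)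

(* Defs.v *)
From HB Require Import structures.
From mathcomp Require Import all_boot all_order all_algebra.
From mathcomp Require Import reals exp.
Set Implicit Arguments. Unset Strict Implicit. Unset Printing Implicit Defensive.
Import Order.TTheory GRing.Theory Num.Theory.
Local Open Scope ring_scope.

Notation bigraph n m := {set ('I_n * 'I_m)%type}.

(* Probability of the graph E under G(n,m,p): edges independent with prob. p. *)
Definition gnmp_weight (R : realType) (n m : nat) (p : R) (E : bigraph n m) : R :=
  p ^+ #|E| * (1 - p) ^+ (n * m - #|E|)%N.

Definition gnmp_prob (R : realType) (n m : nat) (p : R) (A : pred (bigraph n m)) : R :=
  \sum_(E : bigraph n m | A E) gnmp_weight p E.

Definition is_s_matching (n m : nat) (s : 'I_n -> nat) (F : bigraph n m) : bool :=
  [forall i, #|[set j | (i, j) \in F]| <= s i]%N &&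
  [forall j, #|[set i | (i, j) \in F]| <= 1]%N.

Definition is_left_sat_s_matching (n m : nat) (s : 'I_n -> nat) (F : bigraph n m) : bool :=
  is_s_matching s F && [forall i, #|[set j | (i, j) \in F]| == s i].

Definition has_left_sat_s_matching (n m : nat) (s : 'I_n -> nat) (G : bigraph n m) : bool :=
  [exists F : bigraph n m, (F \subset G) && is_left_sat_s_matching s F].

(* Main.v *)
Require Import Defs.
From HB Require Import structures.
From mathcomp Require Import all_boot all_order all_algebra.
From mathcomp Require Import reals exp.
From mathcomp Require Import sequences.
From mathcomp Require Import zify ring lra.
Import Order.TTheory GRing.Theory Num.Theory.

Set Implicit Arguments. Unset Strict Implicit. Unset Printing Implicit Defensive.

Definition nbh (I J : finType) (G : {set I * J}) (T : {set I}) : {set J} :=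
  [set j | [exists i in T, (i, j) \in G]].

Lemma nbhS (I J : finType) (G G' : {set I * J}) (T T' : {set I}) :
  G \subset G' -> T \subset T' -> nbh G T \subset nbh G' T'.
Proof.
move=> /subsetP sG /subsetP sT; apply/subsetP => j; rewrite !inE.
case/exists_inP => i iT ijG; apply/exists_inP; exists i; [exact: sT|exact: sG].
Qed.

Lemma sum_if_in (I : finType) (A T : {set I}) (d : I -> nat) :
  \sum_(i in A) (if i \in T then d i else 0) = \sum_(i in A :&: T) d i.
Proof.
rewrite (big_setID T) /= [X in _ + X]big1 ?addn0; last by move=> i; rewrite !inE => /andP[/negbTE-> _].
by apply: eq_bigr => i; rewrite !inE => /andP[_ ->].
Qed.

Lemma sum_if_notin (I : finType) (A T : {set I}) (d : I -> nat) :
  \sum_(i in A) (if i \in T then 0 else d i) = \sum_(i in A :\: T) d i.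
Proof.
rewrite (big_setID T) /= big1 ?add0n; last by move=> i; rewrite !inE => /andP[_ ->].
by apply: eq_bigr => i; rewrite !inE => /andP[/negbTE-> _].
Qed.

Theorem hall (I J : finType) (d : I -> nat) (G : {set I * J}) :
  (forall T : {set I}, \sum_(i in T) d i <= #|nbh G T|) ->
  exists F : {set I * J}, [/\ F \subset G,
    (forall i, #|[set j | (i, j) \in F]| = d i) &
    (forall j, #|[set i | (i, j) \in F]| <= 1)].
Proof.
have [k] := ubnP (\sum_i d i); elim: k d G => // k IH d G ltk hallG.
have [allz|] := boolP [forall i, d i == 0].
  exists set0; split; first exact: sub0set.
    move=> i; rewrite (eqP (forallP allz i)).
    have -> : [set j | (i, j) \in (set0 : {set I * J})] = set0 by apply/setP=> j; rewrite !inE.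
    by rewrite cards0.
  move=> j; have -> : [set i | (i, j) \in (set0 : {set I * J})] = set0 by apply/setP=> i; rewrite !inE.
  by rewrite cards0.
rewrite negb_forall => /existsP [i0 di0]; rewrite -lt0n in di0.
have sumD (T : {set I}) : \sum_i d i = \sum_(i in T) d i + \sum_(i in ~: T) d i.
  by rewrite (bigID (mem T)) /=; congr (_ + _); apply: eq_bigl => i; rewrite !inE.
case: (boolP [exists T : {set I}, [&& i0 \notin T, 0 < \sum_(i in T) d i & \sum_(i in T) d i == #|nbh G T|]]).
- case/existsP => T /and3P [i0T posT /eqP tightT].
  pose NT := nbh G T.
  pose d1 i := if i \in T then d i else 0.
  pose d2 i := if i \in T then 0 else d i.
  pose G1 := [set e in G | e.2 \in NT].
  pose G2 := [set e in G | e.2 \notin NT].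
  have sd1 : \sum_i d1 i = \sum_(i in T) d i.
    by rewrite /d1 -big_mkcond /=.
  have sd2 : \sum_i d2 i = \sum_(i in ~: T) d i.
    rewrite /d2 (eq_bigr (fun i => if i \in ~: T then d i else 0)); last by move=> i _; rewrite inE; case: (i \in T).
    by rewrite -big_mkcond.
  have i0C : \sum_(i in ~: T) d i > 0.
    by rewrite (bigD1 i0) ?inE //= ltn_addr.
  have HF1 : exists F : {set I * J}, [/\ F \subset G1, (forall i, #|[set j | (i, j) \in F]| = d1 i)
      & (forall j, #|[set i | (i, j) \in F]| <= 1)].
    apply: (IH d1 G1).
      rewrite sd1; move: ltk; rewrite (sumD T); lia.
    move=> T'; rewrite /d1 sum_if_in; apply: leq_trans (hallG _) _.
    apply: subset_leq_card; apply/subsetP => j; rewrite !inE.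
    case/exists_inP => i; rewrite inE => /andP[iT' iT] ijG; apply/exists_inP; exists i => //.
    by rewrite /G1 /NT !inE ijG /=; apply/exists_inP; exists i.
  have HF2 : exists F : {set I * J}, [/\ F \subset G2, (forall i, #|[set j | (i, j) \in F]| = d2 i)
      & (forall j, #|[set i | (i, j) \in F]| <= 1)].
    apply: (IH d2 G2).
      rewrite sd2; move: ltk; rewrite (sumD T); lia.
    move=> T'; rewrite /d2 sum_if_notin.
    set T'' := T' :\: T.
    have h := hallG (T'' :|: T).
    have e1 : (T'' :|: T) :&: T = T.
      by apply/setP=> i; rewrite !inE; case: (i \in T); case: (i \in T').
    have e2 : (T'' :|: T) :\: T = T''.
      by apply/setP=> i; rewrite !inE; case: (i \in T); case: (i \in T').
    rewrite (big_setID T) /= e1 e2 in h.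
    have sub : nbh G (T'' :|: T) \subset nbh G2 T' :|: NT.
      apply/subsetP => j; rewrite inE => /exists_inP [i iTT ijG]; rewrite in_setU.
      case jNT: (j \in NT); first by rewrite orbT.
      rewrite orbF /nbh inE; apply/exists_inP; exists i.
        move: iTT; rewrite !inE; case iT: (i \in T) => /=; last by case/andP.
        by move: jNT; rewrite /NT inE; move/negbT/negP; case; apply/exists_inP; exists i.
      by rewrite /G2 in_set ijG /= jNT.
    have := subset_leq_card sub; rewrite cardsU.
    move: h; rewrite tightT -/NT; lia.
  have [F1 [sF1 rF1 cF1]] := HF1; have [F2 [sF2 rF2 cF2]] := HF2.
  have inF1 i j : (i, j) \in F1 -> ((i, j) \in G) && (j \in NT).
    by move/(subsetP sF1); rewrite /G1 in_set.
  have inF2 i j : (i, j) \in F2 -> ((i, j) \in G) && (j \notin NT).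
    by move/(subsetP sF2); rewrite /G2 in_set.
  exists (F1 :|: F2); split.
  - apply/subsetP => [[i j]]; rewrite in_setU => /orP[/inF1|/inF2] /andP[] //.
  - move=> i.
    have -> : [set j | (i, j) \in F1 :|: F2] = [set j | (i, j) \in F1] :|: [set j | (i, j) \in F2].
      by apply/setP => j; rewrite !inE.
    rewrite cardsU.
    have -> : [set j | (i, j) \in F1] :&: [set j | (i, j) \in F2] = set0.
      apply/setP => j; rewrite !inE; apply/negP => /andP[/inF1/andP[_ a] /inF2/andP[_ b]].
      by rewrite a in b.
    by rewrite cards0 subn0 rF1 rF2 /d1 /d2; case: (i \in T); rewrite ?addn0.
  - move=> j; case jNT: (j \in NT).
      have -> : [set i | (i, j) \in F1 :|: F2] = [set i | (i, j) \in F1]; last exact: cF1.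
      apply/setP => i; rewrite !inE; case h2: ((i, j) \in F2); rewrite ?orbF //.
      by move: (inF2 _ _ h2); rewrite jNT andbF.
    have -> : [set i | (i, j) \in F1 :|: F2] = [set i | (i, j) \in F2]; last exact: cF2.
    apply/setP => i; rewrite !inE; case h1: ((i, j) \in F1) => //=.
    by move: (inF1 _ _ h1); rewrite jNT andbF.
- move=> notight.
  have nt (T : {set I}) : i0 \notin T -> 0 < \sum_(i in T) d i -> \sum_(i in T) d i < #|nbh G T|.
    move=> a b; rewrite ltn_neqAle hallG andbT; apply/negP => /eqP e.
    by move/existsP: notight; apply; exists T; rewrite a b e eqxx.
  have := hallG [set i0]; rewrite big_set1 => h0.
  have /card_gt0P [j0] : 0 < #|nbh G [set i0]| by apply: leq_trans h0.
  rewrite inE => /exists_inP [i']; rewrite inE => /eqP -> i0j0G.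
  pose d' i := if i == i0 then (d i).-1 else d i.
  pose G' := [set e in G | e.2 != j0].
  have sumd' (T : {set I}) : i0 \in T -> \sum_(i in T) d' i + 1 = \sum_(i in T) d i.
    move=> i0T; rewrite (bigD1 i0) //= [in RHS](bigD1 i0) //= /d' eqxx.
    rewrite (eq_bigr d); last by move=> i /andP[_ /negbTE ->].
    by rewrite addnAC addn1 prednK.
  have sumd'n (T : {set I}) : i0 \notin T -> \sum_(i in T) d' i = \sum_(i in T) d i.
    move=> i0T; apply: eq_bigr => i iT; rewrite /d'; case: eqP => // e.
    by move: i0T; rewrite -e iT.
  have HF : exists F : {set I * J}, [/\ F \subset G', (forall i, #|[set j | (i, j) \in F]| = d' i)
      & (forall j, #|[set i | (i, j) \in F]| <= 1)].
    apply: (IH d' G').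
      have := sumd' setT (in_setT i0).
      have -> : \sum_(i in setT) d' i = \sum_i d' i by apply: eq_bigl => i; rewrite inE.
      have -> : \sum_(i in setT) d i = \sum_i d i by apply: eq_bigl => i; rewrite inE.
      move: ltk; lia.
    move=> T.
    have card' : #|nbh G T| <= #|nbh G' T| + 1.
      have sub : nbh G T \subset j0 |: nbh G' T.
        apply/subsetP => j; rewrite inE => /exists_inP [i iT ijG]; rewrite in_setU1.
        case: (eqVneq j j0) => //= jj0; rewrite /nbh inE; apply/exists_inP; exists i => //.
        by rewrite /G' in_set ijG /= jj0.
      have := subset_leq_card sub; rewrite cardsU1; case: (j0 \notin _) => /=; lia.
    have := hallG T.
    case i0T: (i0 \in T).
      by have := sumd' T i0T; lia.
    rewrite (sumd'n T (negbT i0T)).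
    case: (posnP (\sum_(i in T) d i)) => [->|pos] //.
    by have := nt T (negbT i0T) pos; lia.
  have [F' [sF' rF' cF']] := HF.
  have inF' i j : (i, j) \in F' -> ((i, j) \in G) && (j != j0).
    by move/(subsetP sF'); rewrite /G' in_set.
  exists ((i0, j0) |: F'); split.
  - apply/subsetP => [[i j]]; rewrite in_setU1 => /orP[/eqP [-> ->] //|/inF' /andP[] //].
  - move=> i; case: (eqVneq i i0) => [->|ii0].
      have -> : [set j | (i0, j) \in (i0, j0) |: F'] = j0 |: [set j | (i0, j) \in F'].
        by apply/setP => j; rewrite !inE xpair_eqE eqxx.
      rewrite cardsU1 rF' /d' eqxx inE.
      case h: ((i0, j0) \in F'); first by move: (inF' _ _ h); rewrite eqxx andbF.
      by rewrite add1n prednK.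
    have -> : [set j | (i, j) \in (i0, j0) |: F'] = [set j | (i, j) \in F'].
      by apply/setP => j; rewrite !inE xpair_eqE (negbTE ii0).
    by rewrite rF' /d' (negbTE ii0).
  - move=> j; case: (eqVneq j j0) => [->|jj0].
      have -> : [set i | (i, j0) \in (i0, j0) |: F'] = [set i0].
        apply/setP => i; rewrite !inE xpair_eqE eqxx andbT.
        case h: ((i, j0) \in F'); last by rewrite orbF.
        by move: (inF' _ _ h); rewrite eqxx andbF.
      by rewrite cards1.
    have -> : [set i | (i, j) \in (i0, j0) |: F'] = [set i | (i, j) \in F'].
      by apply/setP => i; rewrite !inE xpair_eqE (negbTE jj0) andbF.
    exact: cF'.
Qed.


Local Open Scope ring_scope.

Lemma sub_binom (R : realType) (T : finType) (a b : R) (Y : {set T}) :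
  \sum_(E : {set T} | E \subset Y) a ^+ #|E| * b ^+ (#|Y| - #|E|)%N = (a + b) ^+ #|Y|.
Proof.
move e: #|Y| => n; elim: n Y e => [|n IH] Y e.
  rewrite (cards0_eq e) (big_pred1 set0) ?cards0 ?expr0 ?mulr1 //.
  by move=> E; rewrite /= subset0.
have /card_gt0P [x xY] : (0 < #|Y|)%N by rewrite e.
have eY' : #|Y :\ x| = n by move: e; rewrite (cardsD1 x) xY; lia.
rewrite (bigID (fun E : {set T} => x \in E)) /=.
rewrite (reindex_onto (fun E : {set T} => x |: E) (fun E : {set T} => E :\ x)); last first.
  by move=> E /andP[_ xE]; rewrite setD1K.
rewrite [X in X + _](eq_bigl (fun E : {set T} => E \subset Y :\ x)); last first.
  move=> E; rewrite subsetD1 subUset sub1set xY /= setU11 andbT.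
  case xE: (x \in E) => /=; last by rewrite setU1K ?xE ?eqxx.
  rewrite andbF; apply/negbTE/negP => /andP[_ /eqP h].
  by have := setD11 x (x |: E); rewrite h xE.
rewrite [X in _ + X](eq_bigl (fun E : {set T} => E \subset Y :\ x)); last first.
  by move=> E; rewrite subsetD1.
rewrite [X in X + _](eq_bigr (fun E : {set T} => a * (a ^+ #|E| * b ^+ (#|Y :\ x| - #|E|)%N))); last first.
  move=> E /subsetD1P [EY xE]; rewrite cardsU1 xE eY' add1n exprS.
  by rewrite subSS mulrA.
rewrite [X in _ + X](eq_bigr (fun E : {set T} => b * (a ^+ #|E| * b ^+ (#|Y :\ x| - #|E|)%N))); last first.
  move=> E /subsetD1P [EY xE]; rewrite eY'.
  have : (#|E| <= n)%N by rewrite -eY'; apply: subset_leq_card; apply/subsetD1P.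
  by move=> le; rewrite subSn // exprS mulrCA.
by rewrite -!mulr_sumr eY' (IH _ eY') -mulrDl exprS.
Qed.

Lemma card_bigraphT n m : #|[set: ('I_n * 'I_m)%type]| = (n * m)%N.
Proof. by rewrite cardsT card_prod !card_ord. Qed.

Lemma weight_ge0 (R : realType) n m (p : R) (E : bigraph n m) :
  0 <= p -> p <= 1 -> 0 <= gnmp_weight p E.
Proof.
by move=> p0 p1; rewrite /gnmp_weight mulr_ge0 // exprn_ge0 // subr_ge0.
Qed.

Lemma prob_total (R : realType) n m (p : R) :
  \sum_(E : bigraph n m) gnmp_weight p E = 1.
Proof.
have := sub_binom p (1 - p) [set: ('I_n * 'I_m)%type].
have -> : p + (1 - p) = 1 by rewrite addrC subrK.
rewrite card_bigraphT expr1n => <-.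
by apply: eq_bigl => E; rewrite subsetT.
Qed.

Lemma prob_compl (R : realType) n m (p : R) (A : pred (bigraph n m)) :
  gnmp_prob p A = 1 - gnmp_prob p (predC A).
Proof.
by rewrite -(@prob_total R n m p) (bigID A) /= addrK.
Qed.

Lemma prob_mono (R : realType) n m (p : R) (A B : pred (bigraph n m)) :
  0 <= p -> p <= 1 -> (forall E, A E -> B E) -> gnmp_prob p A <= gnmp_prob p B.
Proof.
move=> p0 p1 AB; rewrite /gnmp_prob [X in X <= _]big_mkcond [X in _ <= X]big_mkcond.
apply: ler_sum => E _; case AE: (A E); first by rewrite (AB _ AE).
by case: (B E); rewrite ?weight_ge0.
Qed.

Lemma prob_union (R : realType) n m (p : R) (K : finType) (P : pred K)
    (A : K -> pred (bigraph n m)) (Q : pred (bigraph n m)) :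
  0 <= p -> p <= 1 -> (forall E, Q E -> exists k, P k && A k E) ->
  gnmp_prob p Q <= \sum_(k | P k) gnmp_prob p (A k).
Proof.
move=> p0 p1 QA; rewrite /gnmp_prob.
rewrite (eq_bigr (fun k => \sum_E (if A k E then gnmp_weight p E else 0))); last first.
  by move=> k _; rewrite big_mkcond.
rewrite exchange_big /= big_mkcond /=; apply: ler_sum => E _.
case QE: (Q E); last by apply: sumr_ge0 => k _; case: (A k E); rewrite ?weight_ge0.
have [k /andP [Pk AkE]] := QA E QE.
rewrite (bigD1 k) //= AkE lerDl; apply: sumr_ge0 => k' _.
by case: (A k' E); rewrite ?weight_ge0.
Qed.

Lemma prob_empty (R : realType) n m (p : R) (X : bigraph n m) :
  gnmp_prob p (fun E => X :&: E == set0) = (1 - p) ^+ #|X|.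
Proof.
have cX : #|~: X| = (n * m - #|X|)%N by rewrite cardsCs setCK card_prod !card_ord.
have leX : (#|X| <= n * m)%N by rewrite -card_bigraphT subset_leq_card // subsetT.
rewrite /gnmp_prob (eq_bigl (fun E : bigraph n m => E \subset ~: X)); last first.
  by move=> E; rewrite /= setI_eq0 -disjoints_subset disjoint_sym.
rewrite (eq_bigr (fun E : bigraph n m => (p ^+ #|E| * (1 - p) ^+ (#|~: X| - #|E|)%N) * (1 - p) ^+ #|X|)).
  rewrite -mulr_suml sub_binom.
  have -> : p + (1 - p) = 1 by rewrite addrC subrK.
  by rewrite expr1n mul1r.
move=> E EX; rewrite /gnmp_weight -mulrA -exprD; congr (_ * _ ^+ _).
have := subset_leq_card EX; rewrite cX; lia.
Qed.

Lemma bin_le_exp (m k : nat) : ('C(m, k) <= m ^ k)%N.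
Proof.
apply: (@leq_trans (m ^_ k)); first by rewrite -bin_ffact leq_pmulr ?fact_gt0.
elim: k => [|k IH]; first by rewrite ffactn0.
rewrite ffactnSr expnS mulnC; apply: leq_mul; first exact: leq_subr.
exact: IH.
Qed.

Lemma tail (R : realType) (B p : R) (n m X K : nat) : 0 <= B -> (0 < n)%N -> (1 <= m)%N ->
  8 * B * ln m%:R / n%:R <= p -> p <= 1 ->
  K%:R * n%:R <= 8 * B * X%:R -> (1 - p) ^+ X * m%:R ^+ K <= 1.
Proof.
move=> B0 n0 m1 hp p1 hK.
have n0R : 0 < n%:R :> R by rewrite ltr0n.
have m0R : 0 < m%:R :> R by rewrite ltr0n.
have lnm0 : 0 <= ln (m%:R : R) by rewrite ln_ge0 // ler1n.
have p0 : 0 <= p.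
  by apply: le_trans hp; rewrite divr_ge0 // ?ler0n // mulr_ge0 // mulr_ge0.
have h1 : (1 - p) ^+ X <= expR (- p) ^+ X.
  apply: lerXn2r; rewrite ?nnegrE ?subr_ge0 ?expR_ge0 //.
  exact: expR_ge1Dx.
have h2 : (m%:R : R) ^+ K = expR (K%:R * ln m%:R).
  by rewrite expRM_natl lnK // inE.
apply: (le_trans (ler_wpM2r (exprn_ge0 _ (ltW m0R)) h1)).
rewrite h2 -expRM_natl -expRD expR_le1.
rewrite mulrN addrC subr_le0.
have e1 : K%:R <= 8 * B * X%:R / n%:R by rewrite ler_pdivlMr.
apply: (le_trans (ler_wpM2r lnm0 e1)).
have -> : 8 * B * X%:R / n%:R * ln (m%:R : R) = X%:R * (8 * B * ln m%:R / n%:R) by ring.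
by apply: ler_wpM2l; rewrite ?ler0n.
Qed.

Lemma fin_bound (R : realType) (M N q C : R) (a b j X : nat) :
  1 <= M -> 0 < N -> N <= M -> 0 <= q -> 0 <= C -> C <= M ^+ a ->
  (2 + j + a <= b)%N -> q ^+ X * M ^+ b <= 1 ->
  C * q ^+ X <= (M ^+ 2)^-1 * (N^-1) ^+ j.
Proof.
move=> M1 N0 NM q0 C0 CM hb hq.
have M0 : 0 < M by apply: lt_le_trans M1.
rewrite exprVn -invfM -[_^-1]mul1r ler_pdivlMr ?mulr_gt0 ?exprn_gt0 //.
apply: le_trans hq.
have h1 : M ^+ 2 * N ^+ j <= M ^+ (2 + j).
  rewrite exprD; apply: ler_wpM2l; first exact: exprn_ge0 (ltW M0).
  by apply: lerXn2r; rewrite ?nnegrE; [exact: ltW N0|exact: ltW M0|exact: NM].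
have h2 : M ^+ a * M ^+ (2 + j) <= M ^+ b.
  by rewrite -exprD ler_weXn2l // addnC.
apply: (@le_trans _ _ (M ^+ a * q ^+ X * (M ^+ 2 * N ^+ j))).
  apply: ler_wpM2r; first by rewrite mulr_ge0 ?exprn_ge0 ?ltW.
  by apply: ler_wpM2r; first exact: exprn_ge0.
rewrite [M ^+ a * _]mulrC -mulrA; apply: ler_wpM2l; first exact: exprn_ge0.
apply: le_trans h2; apply: ler_wpM2l => //; exact: exprn_ge0 (ltW M0).
Qed.

Lemma small_arith (R : realType) (S N K W B : R) : 0 <= S -> 0 <= B -> 0 <= K -> 0 <= W ->
  N <= 2 * (N - K) -> (N - K) * S <= B * K * W -> 4 * S * N <= 8 * B * (K * (W + 1)).
Proof.
move=> S0 B0 K0 W0 hN hD.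
have h1 : 4 * S * N <= 4 * S * (2 * (N - K)) by apply: ler_wpM2l => //; rewrite mulr_ge0.
apply: (le_trans h1).
have -> : 4 * S * (2 * (N - K)) = 8 * ((N - K) * S) by ring.
have h2 : 8 * ((N - K) * S) <= 8 * (B * K * W) by apply: ler_wpM2l.
apply: (le_trans h2).
have -> : 8 * B * (K * (W + 1)) = 8 * (B * K * W) + 8 * (B * K) by ring.
by rewrite lerDl !mulr_ge0.
Qed.

Lemma large_arith (R : realType) (U N K B : R) : 0 <= U -> 1 <= B -> 0 <= K ->
  N <= 2 * K -> 4 * U * N <= 8 * B * (K * U).
Proof.
move=> U0 B1 K0 hN.
have h1 : 4 * U * N <= 4 * U * (2 * K) by apply: ler_wpM2l => //; rewrite mulr_ge0.
apply: (le_trans h1).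
have -> : 4 * U * (2 * K) = 1 * (8 * (K * U)) by ring.
have -> : 8 * B * (K * U) = B * (8 * (K * U)) by ring.
by apply: ler_wpM2r => //; rewrite !mulr_ge0.
Qed.

Lemma natA (a c d m : nat) : (a + c <= m -> d <= c -> d + 1 <= (m - a).+1)%N. Proof. intros; lia. Qed.
Lemma natB (a c m : nat) : (a + c <= m -> a <= m)%N. Proof. intros; lia. Qed.
Lemma natC (a c m : nat) : (a + c <= m -> c <= m - a)%N. Proof. intros; lia. Qed.
Lemma natD (a k m : nat) : (1 <= k -> k <= a -> a <= m -> (m - a).+1 <= m)%N. Proof. intros; lia. Qed.
Lemma natE (a m : nat) : (m - (m - a).+1 <= a)%N. Proof. intros; lia. Qed.
Lemma natF (a k : nat) : (1 <= k -> k <= a -> 2 + k + a <= 4 * a)%N. Proof. intros; lia. Qed.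
Lemma natG (a : nat) : (3 * a + a = 4 * a)%N. Proof. intros; lia. Qed.
Lemma natH (n k : nat) : (2 * k <= n -> n <= 2 * (n - k))%N. Proof. intros; lia. Qed.
Lemma natI (n k u : nat) : (n - k + 1 <= u -> 2 + (n - k) + u <= 4 * u)%N. Proof. intros; lia. Qed.
Lemma natJ (n k : nat) : (n < 2 * k -> n <= 2 * k)%N. Proof. intros; lia. Qed.

Lemma term_bound (R : realType) (B p : R) (n m : nat) (s : 'I_n -> nat) (T : {set 'I_n}) :
  1 <= B -> (0 < n)%N -> (n <= m)%N -> 8 * B * ln m%:R / n%:R <= p -> p <= 1 ->
  (forall i, (0 < s i)%N) -> (\sum_(i < n) s i <= m)%N ->
  (forall i j, (s i)%:R <= B * (s j)%:R) -> T != set0 ->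
  ('C(m, (m - \sum_(i in T) s i).+1))%:R * (1 - p) ^+ (#|T| * (m - \sum_(i in T) s i).+1)
   <= (m%:R ^+ 2)^-1 * ((n%:R^-1) ^+ #|T| + (n%:R^-1) ^+ (n - #|T|)).
Proof.
move=> B1 n0 nm hp p1 s0 sm sB T0.
set sig := \sum_(i in T) s i; set u := (m - sig).+1; set k := #|T|.
have m1 : (1 <= m)%N by apply: leq_trans nm.
have B0 : 0 <= B by apply: le_trans B1.
have nR0 : 0 < n%:R :> R by rewrite ltr0n.
have nmR : n%:R <= m%:R :> R by rewrite ler_nat.
have mR1 : 1 <= m%:R :> R by rewrite ler1n.
have lnm0 : 0 <= ln (m%:R : R) by rewrite ln_ge0.
have p0 : 0 <= p.
  by apply: le_trans hp; rewrite divr_ge0 // ?ler0n // mulr_ge0 // mulr_ge0.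
have q0 : 0 <= 1 - p by rewrite subr_ge0.
have k1 : (1 <= k)%N by rewrite card_gt0.
have kn : (k <= n)%N by have := subset_leq_card (subsetT T); rewrite cardsT card_ord.
have sumC : (\sum_(i < n) s i = sig + \sum_(i in ~: T) s i)%N.
  by rewrite (bigID (mem T)) /=; congr (_ + _); apply: eq_bigl => i; rewrite !inE.
have cC : #|~: T| = (n - k)%N by rewrite cardsCs setCK card_ord.
have sigk : (k <= sig)%N.
  by rewrite /k -sum1_card /sig; apply: leq_sum => i _; apply: s0.
have sigC : (n - k <= \sum_(i in ~: T) s i)%N.
  by rewrite -cC -sum1_card; apply: leq_sum => i _; apply: s0.
have sm' : (sig + \sum_(i in ~: T) s i <= m)%N by rewrite -sumC.
have hu : (n - k + 1 <= u)%N by apply: natA sm' sigC.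
have sigm : (sig <= m)%N by apply: natB sm'.
have D : (n - k)%:R * sig%:R <= B * k%:R * (m - sig)%:R :> R.
  have e1 : (n - k)%:R * sig%:R = \sum_(j in ~: T) \sum_(i in T) (s i)%:R :> R.
    by rewrite sumr_const cC -natr_sum mulr_natl.
  have e2 : \sum_(j in ~: T) \sum_(i in T) (B * (s j)%:R) = B * k%:R * (\sum_(j in ~: T) s j)%:R :> R.
    rewrite natr_sum mulr_sumr; apply: eq_bigr => j _.
    by rewrite sumr_const -mulr_natr /k; ring.
  rewrite e1; apply: le_trans (ler_sum _ (fun j _ => ler_sum _ (fun i _ => sB i j))) _.
  rewrite e2; apply: ler_wpM2l; first by rewrite mulr_ge0 ?ler0n.
  by rewrite ler_nat; apply: natC sm'.
have nk : (n - k)%:R = n%:R - k%:R :> R by rewrite natrB.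
have uR : u%:R = (m - sig)%:R + 1 :> R by rewrite /u -addn1 natrD.
have addbound (x y : R) : 0 <= y -> x <= (m%:R ^+ 2)^-1 * ((n%:R^-1) ^+ k) ->
    x <= (m%:R ^+ 2)^-1 * ((n%:R^-1) ^+ k + y).
  move=> y0 hx; apply: le_trans hx _; rewrite mulrDr lerDl mulr_ge0 //.
  by rewrite invr_ge0 exprn_ge0 ?ler0n.
have addbound2 (x y : R) : 0 <= y -> x <= (m%:R ^+ 2)^-1 * ((n%:R^-1) ^+ (n - k)) ->
    x <= (m%:R ^+ 2)^-1 * (y + (n%:R^-1) ^+ (n - k)).
  move=> y0 hx; apply: le_trans hx _; rewrite mulrDr lerDr mulr_ge0 //.
  by rewrite invr_ge0 exprn_ge0 ?ler0n.
have xge0 j : 0 <= (n%:R^-1 : R) ^+ j by rewrite exprn_ge0 // invr_ge0 ler0n.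
case: (leqP (2 * k) n) => hk.
-
  apply: addbound; first exact: xge0.
  apply: (@fin_bound R _ _ _ _ sig (4 * sig)%N) => //.
  + rewrite -(@bin_sub m u); last by apply: natD k1 sigk sigm.
    apply: le_trans (_ : (m ^ sig)%:R <= _); first rewrite ler_nat.
      apply: leq_trans (bin_le_exp _ _) _; rewrite leq_pexp2l //; apply: natE.
    by rewrite natrX.
  + exact: natF.
  +
    apply: (@tail R B p n m) => //.
    rewrite !natrM uR.
    have hn : n%:R <= 2 * (n%:R - k%:R) :> R.
      by rewrite -nk -natrM ler_nat; apply: natH.
    have sig0 : 0 <= sig%:R :> R by rewrite ler0n.
    have kR0 : 0 <= k%:R :> R by rewrite ler0n.
    have mk : 0 <= (m - sig)%:R :> R by rewrite ler0n.
    rewrite nk in D.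
    by apply: small_arith => //; rewrite -nk.
-
  apply: addbound2; first exact: xge0.
  apply: (@fin_bound R _ _ _ _ u (4 * u)%N) => //.
  + by rewrite -natrX ler_nat bin_le_exp.
  + exact: natI.
  +
    apply: (@tail R B p n m) => //.
    rewrite !natrM.
    have hn : n%:R <= 2 * k%:R :> R by rewrite -natrM ler_nat; apply: natJ.
    have uR0 : 0 <= u%:R :> R by rewrite ler0n.
    by apply: large_arith => //; rewrite ler0n.
Qed.


Unset Implicit Arguments.

Theorem lemma7 (R : realType) (B : R) :
  1 <= B ->
  forall eps : R, 0 < eps ->
  exists N : nat, forall n m : nat, (N <= n)%N -> (n <= m)%N ->
  forall p : R, 8 * B * ln (m%:R) / n%:R <= p -> p <= 1 ->
  forall s : 'I_n -> nat,
    (forall i, (0 < s i)%N) ->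
    (\sum_(i < n) s i <= m)%N ->
    (forall i j, (s i)%:R <= B * (s j)%:R) ->
    1 - eps <= @gnmp_prob R n m p (@has_left_sat_s_matching n m s).
Proof.
move=> B1 eps eps0.
exists (Num.truncn (2 * expR 1 / eps)).+1.
move=> n m Nn nm p hp p1 s s0 sm sB.
have n0 : (0 < n)%N by apply: leq_trans Nn.
have m1 : (1 <= m)%N by apply: leq_trans nm.
have B0 : 0 <= B by apply: le_trans B1.
have lnm0 : 0 <= ln (m%:R : R) by rewrite ln_ge0 // ler1n.
have p0 : 0 <= p.
  by apply: le_trans hp; rewrite divr_ge0 // ?ler0n // mulr_ge0 // mulr_ge0.
pose sig (T : {set 'I_n}) := \sum_(i in T) s i.
pose u (T : {set 'I_n}) := (m - sig T).+1.
have sigm T : (sig T <= m)%N.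
  apply: leq_trans sm; rewrite /sig [X in (_ <= X)%N](bigID (mem T)) /=.
  by rewrite (eq_bigl (mem T)) ?leq_addr // => i; rewrite inE.
have hallhas (E : bigraph n m) : (forall T, (sig T <= #|nbh E T|)%N) -> has_left_sat_s_matching s E.
  move=> H; have [F [sF rF cF]] := hall H.
  apply/existsP; exists F; rewrite sF /is_left_sat_s_matching /is_s_matching /=.
  apply/andP; split; first (apply/andP; split).
  - by apply/forallP => i; rewrite rF.
  - by apply/forallP => j; rewrite cF.
  - by apply/forallP => i; rewrite rF.
pose K := ({set 'I_n} * {set 'I_m})%type.
pose P (k : K) := (k.1 != set0) && (#|k.2| == u k.1).
pose A (k : K) := fun E : bigraph n m => setX k.1 k.2 :&: E == set0.
have step1 : gnmp_prob p (predC (@has_left_sat_s_matching n m s)) <= \sum_(k | P k) gnmp_prob p (A k).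
  apply: prob_union => // E /= nhas.
  case: (boolP [forall T : {set 'I_n}, (sig T <= #|nbh E T|)%N]) => [/forallP H|].
    by rewrite hallhas in nhas.
  rewrite negb_forall => /existsP [T]; rewrite -ltnNge => hT.
  have T0 : T != set0.
    by apply/negP => /eqP eT; move: hT; rewrite /sig eT big_set0.
  have : (u T <= #|~: nbh E T|)%N.
    have := cardsC (nbh E T); rewrite card_ord => e.
    move: (sigm T); rewrite /u; lia.
  case/card_geqP => l [ul sl subl].
  exists (T, [set j in l]); rewrite /P /A /= T0 /=.
  rewrite cardsE (card_uniqP ul) sl eqxx /=.
  apply/eqP/setP => [[i j]]; rewrite !inE /=; apply/negP => /andP [/andP [iT jl] ijE].
  have := subl j jl; rewrite !inE => /negP; apply; apply/exists_inP; by exists i.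
pose M : R := m%:R; pose x : R := n%:R^-1.
have nR0 : 0 < n%:R :> R by rewrite ltr0n.
have x0 : 0 <= x by rewrite invr_ge0 ltW.
have step2 : \sum_(k | P k) gnmp_prob p (A k) =
    \sum_(T : {set 'I_n} | T != set0) ('C(m, u T))%:R * (1 - p) ^+ (#|T| * u T).
  rewrite (eq_bigr (fun k : K => (1 - p) ^+ (#|k.1| * #|k.2|))); last first.
    by move=> k _; rewrite /A prob_empty cardsX.
  rewrite /P -(pair_big_dep (fun T : {set 'I_n} => T != set0) (fun T (U : {set 'I_m}) => #|U| == u T)
     (fun T U => (1 - p) ^+ (#|T| * #|U|))) /=.
  apply: eq_bigr => T _.
  rewrite (eq_bigr (fun _ => (1 - p) ^+ (#|T| * u T))); last by move=> U /eqP ->.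
  have -> : \sum_(U : {set 'I_m} | #|U| == u T) (1 - p) ^+ (#|T| * u T) =
      \sum_(U in [set U : {set 'I_m} | #|U| == u T]) (1 - p) ^+ (#|T| * u T).
    by apply: eq_bigl => U; rewrite inE.
  by rewrite sumr_const card_draws card_ord mulr_natl.
pose g (T : {set 'I_n}) := (M ^+ 2)^-1 * (x ^+ #|T| + x ^+ (n - #|T|)).
have step3 : \sum_(T : {set 'I_n} | T != set0) ('C(m, u T))%:R * (1 - p) ^+ (#|T| * u T)
    <= \sum_(T : {set 'I_n}) g T.
  apply: (@le_trans _ _ (\sum_(T : {set 'I_n} | T != set0) g T)).
    apply: ler_sum => T T0; exact: (term_bound B1 n0 nm hp p1 s0 sm sB T0).
  rewrite [X in _ <= X](bigID (fun T : {set 'I_n} => T != set0)) /= lerDl.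
  apply: sumr_ge0 => T _; rewrite /g mulr_ge0 ?addr_ge0 ?exprn_ge0 //.
  by rewrite invr_ge0 exprn_ge0 // ler0n.
have step4 : \sum_(T : {set 'I_n}) g T = (M ^+ 2)^-1 * ((1 + x) ^+ n *+ 2).
  rewrite -mulr_sumr big_split /=; congr (_ * _).
  have e1 := sub_binom x 1 [set: 'I_n].
  have e2 := sub_binom 1 x [set: 'I_n].
  rewrite cardsT card_ord in e1 e2.
  rewrite mulr2n; congr (_ + _).
    rewrite addrC -e1; apply: eq_big => [T|T _]; first by rewrite subsetT.
    by rewrite expr1n mulr1.
  rewrite -e2; apply: eq_big => [T|T _]; first by rewrite subsetT.
  by rewrite expr1n mul1r.
have step5 : (1 + x) ^+ n <= expR 1.
  apply: (@le_trans _ _ (expR x ^+ n)).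
    by apply: lerXn2r; rewrite ?nnegrE ?addr_ge0 ?expR_ge0 // expR_ge1Dx.
  by rewrite -expRM_natl /x mulfV // gt_eqF.
rewrite prob_compl lerD2l lerN2.
apply: (le_trans step1); rewrite step2; apply: (le_trans step3); rewrite step4.
have M2 : n%:R <= M ^+ 2.
  rewrite /M -natrX ler_nat; apply: leq_trans nm _.
  by rewrite expnS expn1 leq_pmulr //.
have M20 : 0 < M ^+ 2 by apply: lt_le_trans M2.
rewrite mulrC ler_pdivrMr //.
apply: (@le_trans _ _ (expR 1 *+ 2)).
  by rewrite lerMn2r step5 orbT.
have hN := truncnS_gt (2 * expR 1 / eps).
have nN : (Num.truncn (2 * expR 1 / eps)).+1%:R <= n%:R :> R by rewrite ler_nat.
have h6 : 2 * expR 1 / eps <= M ^+ 2 by apply: ltW; apply: lt_le_trans hN _; apply: le_trans nN M2.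
rewrite ler_pdivrMr // in h6.
by rewrite -mulr_natl [eps * _]mulrC.
Qed.
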